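(* For every integer $k\ge 1$, the complete $(k+1)$-partite graph $K_{1,1,2,\ldots,k}$ (with parts of sizes $1,1,2,3,\ldots,k$) is uniquely $k$-list colorable.
   Context: All graphs are finite, simple and undirected. A list assignment $L$ for a graph $G$ assigns to each vertex $v$ a set $L(v)$ of colors; an $L$-coloring is a proper vertex coloring $c$ of $G$ with $c(v)\in L(v)$ for every vertex $v$. A $k$-list assignment is a list assignment with $|L(v)|=k$ for all $v$. $G$ is uniquely $k$-list colorable (U$k$LC) if there exists a $k$-list assignment $L$ such that $G$ has exactly one $L$-coloring. *)

(* Defs.v *)
From mathcomp Require Import all_boot.
Set Implicit Arguments. Unset Strict Implicit. Unset Printing Implicit Defensive.

(* A simple graph: vertex set a finType T, edge relation e : rel T
   (symmetric, irreflexive).  Colors are natural numbers (WLOG: lists are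
   finite, so any color set can be injected into nat). *)
Definition simple_graph (T : finType) (e : rel T) : Prop :=
  symmetric e /\ irreflexive e.

Definition k_list_assignment (T : finType) (k : nat) (L : T -> seq nat) : Prop :=
  forall v, uniq (L v) /\ size (L v) = k.

Definition L_coloring (T : finType) (e : rel T) (L : T -> seq nat)
  (c : T -> nat) : Prop :=
  (forall v, c v \in L v) /\ (forall u v, e u v -> c u != c v).

Definition UkLC (T : finType) (e : rel T) (k : nat) : Prop :=
  exists L : T -> seq nat, k_list_assignment k L /\
    exists c : T -> nat, L_coloring e L c /\
      forall c' : T -> nat, L_coloring e L c' -> forall v, c' v = c v.

(* The complete (k+1)-partite graph K_{1,1,2,...,k}: parts indexed by
   i : 'I_k.+1, part i has size maxn 1 i, i.e. sizes 1,1,2,...,k. *)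
Definition part_size (k : nat) (i : 'I_k.+1) : nat := maxn 1 i.

Definition Kvert (k : nat) : finType := {i : 'I_k.+1 & 'I_(part_size i)}.

Definition Kedge (k : nat) : rel (Kvert k) := fun u v => tag u != tag v.
Arguments Kedge k : clear implicits.

(* Main.v *)
Require Import Defs.
From mathcomp Require Import all_boot.
From mathcomp Require Import zify.
Set Implicit Arguments. Unset Strict Implicit. Unset Printing Implicit Defensive.

Definition fom (k : nat) (v : Kvert k) : nat :=
  if nat_of_ord (tag v) == 0 then 1 else if nat_of_ord (tag v) == 1 then 0 else nat_of_ord (tagged v).

Definition Lst (k : nat) (v : Kvert k) : seq nat := rem (fom v) (iota 0 k.+1).

Lemma ps_gt0 k (i : 'I_k.+1) : 0 < part_size i.
Proof. rewrite /part_size; lia. Qed.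

Definition rep k (i : 'I_k.+1) : Kvert k :=
  Tagged (fun i => 'I_(part_size i)) (Ordinal (ps_gt0 i)).

Lemma fom_lt k (v : Kvert k) : 1 <= k -> fom v < k.+1.
Proof.
move=> hk; rewrite /fom; case: v => i j /=.
have := ltn_ord i; have := ltn_ord j; rewrite /part_size.
case: ifP => _; first lia. case: ifP => _; first lia. lia.
Qed.

Lemma mem_Lst k (v : Kvert k) x : (x \in Lst v) = (x != fom v) && (x < k.+1).
Proof. by rewrite /Lst (mem_rem_uniq _ (iota_uniq _ _)) inE mem_iota. Qed.

Theorem mainTheorem17 (k : nat) : 1 <= k ->
  simple_graph (Kedge k) /\ UkLC (Kedge k) k.
Proof.
move=> hk; split.
  split; first by move=> u v; rewrite /Kedge eq_sym.
  by move=> u; rewrite /Kedge eqxx.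
exists (@Lst k); split.
  move=> v; split; first exact: rem_uniq (iota_uniq _ _).
  by rewrite /Lst size_rem ?size_iota // mem_iota /= fom_lt.
exists (fun v => nat_of_ord (tag v)); split.
  split.
    move=> [i j]; rewrite mem_Lst /fom /=; apply/andP; split=> //.
    have := ltn_ord j; rewrite /part_size.
    case: ifP => /eqP h0; first by move=> _; apply/eqP; lia.
    case: ifP => /eqP h1; first by move=> _; apply/eqP; lia.
    move=> hj; apply/eqP => e; lia.
  by move=> u v; rewrite /Kedge.
move=> c' [H1 H2].
have Hc v : (c' v != fom v) && (c' v < k.+1) by rewrite -mem_Lst.
pose g (i : 'I_k.+1) : 'I_k.+1 := inord (c' (rep i)).
have gv i : nat_of_ord (g i) = c' (rep i).
  by rewrite /g /= inordK //; case/andP: (Hc (rep i)).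
have ginj : injective g.
  move=> i i' e; apply/eqP; apply/negPn/negP => ne.
  have := H2 (rep i) (rep i'); rewrite /Kedge /= ne -!gv e eqxx.
  by move=> /(_ isT).
have [g' gK g'K] := injF_bij ginj.
have A v : c' v = c' (rep (tag v)).
  pose x : 'I_k.+1 := inord (c' v).
  have xv : nat_of_ord x = c' v by rewrite /x /= inordK //; case/andP: (Hc v).
  have e : c' (rep (g' x)) = c' v by rewrite -gv g'K.
  case: (eqVneq (g' x) (tag v)) => [<- //|ne].
  by have := H2 (rep (g' x)) v; rewrite /Kedge /= ne e eqxx => /(_ isT).
have B i : nat_of_ord i <= nat_of_ord (g i).
  rewrite leqNgt; apply/negP => lt.
  have hi : 0 < nat_of_ord i by apply: leq_ltn_trans lt.
  have hm : nat_of_ord (g i) < part_size i.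
    by rewrite /part_size; apply: leq_trans lt _; exact: leq_maxr.
  pose w : Kvert k := Tagged (fun i => 'I_(part_size i)) (Ordinal hm).
  have := Hc w; rewrite (A w) /= -gv.
  rewrite /fom /=.
  case: ifP => /eqP h0; first lia.
  case: ifP => /eqP h1; last by rewrite eqxx.
  have -> : nat_of_ord (g i) = 0 by lia. by [].
have C n : forall i : 'I_k.+1, k - nat_of_ord i < n -> g i = i.
  elim: n => [|n IH] i; first by [].
  move=> hn; case: (eqVneq (g i) i) => // ne.
  have lt : nat_of_ord i < nat_of_ord (g i).
    have := B i; rewrite leq_eqVlt => /orP [/eqP e|//].
    by move: ne; rewrite -val_eqE /= e eqxx.
  have hgi : k - nat_of_ord (g i) < n by have := ltn_ord (g i); lia.
  by have := IH _ hgi => /ginj.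
move=> v; rewrite A -gv (C k.+1 (tag v)) //.
have := ltn_ord (tag v); lia.
Qed.
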